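(* Let $d\ge 3$ and let $A$ be a $d$-dimensional $(0,1)$-matrix of order $4$ equivalent to $\mathcal{M}_4^d$, with (unique) block-permutation parameters $(\mathcal{E},\lambda,s)$, $\mathcal{E}=(\varepsilon_1,\dots,\varepsilon_d)$, where exactly $k$ of the $\varepsilon_i$ equal $2$. (1) If $0\le k<d$, then every filled subcube of $\mathcal{M}_4^d$ intersects exactly $2^{d-k-1}$ filled subcubes of $A$, and each such intersection is a $k$-dimensional submatrix of order $2$ (a set of the form $T_1\times\dots\times T_d$ with exactly $k$ of the $T_i$ of size $2$ and the others of size $1$). (2) If $k=d$ and $s=0$, then the filled subcubes of $A$ coincide with the filled subcubes of $\mathcal{M}_4^d$; if $k=d$ and $s=1$, then no filled subcube of $A$ intersects any filled subcube of $\mathcal{M}_4^d$.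
   Context: $\mathcal{M}_4^d$ has entry $1$ at $\alpha$ iff $\alpha_1+\dots+\alpha_d\equiv0\pmod 4$. Equivalence: permuting coordinate positions and/or applying a permutation of $\{0,1,2,3\}$ to a single coordinate, repeatedly. Define $p_1,p_2,p_3:\{0,1,2,3\}\to\{0,1\}$ by $p_1(0)=p_1(1)=0,\ p_1(2)=p_1(3)=1$; $p_2(0)=p_2(2)=0,\ p_2(1)=p_2(3)=1$; $p_3(0)=p_3(3)=0,\ p_3(1)=p_3(2)=1$; and $\mu_1(0)=\mu_1(2)=0,\ \mu_1(1)=\mu_1(3)=1$; $\mu_2(0)=\mu_2(1)=0,\ \mu_2(2)=\mu_2(3)=1$; $\mu_3(0)=\mu_3(2)=0,\ \mu_3(1)=\mu_3(3)=1$. $Q_s^d=\{y\in\{0,1\}^d:w(y)\equiv s\pmod 2\}$ ($w$ = Hamming weight). For $\mathcal{E}\in\{1,2,3\}^d$, $s\in\{0,1\}$, $\lambda:Q_s^d\to\{0,1\}$, the block permutation with parameters $(\mathcal{E},\lambda,s)$ is the $(0,1)$-matrix with entry $1$ at $\alpha$ iff $\bigoplus_i p_{\varepsilon_i}(\alpha_i)=s$ and $\bigoplus_i\mu_{\varepsilon_i}(\alpha_i)\oplus\lambda(p_{\varepsilon_1}(\alpha_1),\dots,p_{\varepsilon_d}(\alpha_d))=0$. Every matrix equivalent to $\mathcal{M}_4^d$ ($d\ge3$) is a block permutation for a unique parameter triple; in particular $\mathcal{M}_4^d$ has parameters $((2,\dots,2),\lambda_M,0)$ with $\lambda_M(x)=0$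 iff $w(x)\equiv0\pmod 4$. For a block permutation with parameters $(\mathcal{E},\lambda,s)$, its subcubes are $C_y=\{\alpha:p_{\varepsilon_i}(\alpha_i)=y_i\ \forall i\}$, $y\in\{0,1\}^d$, and $C_y$ is filled if $w(y)\equiv s\pmod 2$. *)

(* Defs.v *)
From Stdlib Require Import Relation_Operators.
From mathcomp Require Import all_boot all_order all_fingroup.
Set Implicit Arguments. Unset Strict Implicit. Unset Printing Implicit Defensive.

Definition cell (d : nat) := {ffun 'I_d -> 'I_4}.
Definition mat (d : nat) := {ffun cell d -> bool}.

Definition M4 (d : nat) : mat d :=
  [ffun a : cell d => (\sum_(i < d) (a i : nat)) %% 4 == 0].

Definition permute_pos d (sigma : {perm 'I_d}) (a : cell d) : cell d :=
  [ffun i => a (sigma i)].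
Definition permute_val d (i : 'I_d) (tau : {perm 'I_4}) (a : cell d) : cell d :=
  [ffun j => if j == i then tau (a j) else a j].

Inductive equiv_step d (A B : mat d) : Prop :=
| ES_pos (sigma : {perm 'I_d}) :
    B = [ffun a => A (permute_pos sigma a)] -> equiv_step A B
| ES_val (i : 'I_d) (tau : {perm 'I_4}) :
    B = [ffun a => A (permute_val i tau a)] -> equiv_step A B.

Definition equivalent d (A B : mat d) : Prop :=
  clos_refl_trans (mat d) (@equiv_step d) A B.

(* p_1, p_2, p_3 (false = 0, true = 1); other indices are unused. *)
Definition p_ (e : nat) (x : 'I_4) : bool :=
  match e with
  | 1 => 2 <= x
  | 2 => odd x
  | 3 => (x == 1 :> nat) || (x == 2 :> nat)
  | _ => false
  end.
Definition mu_ (e : nat) (x : 'I_4) : bool :=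
  match e with
  | 1 => odd x
  | 2 => 2 <= x
  | 3 => odd x
  | _ => false
  end.

Definition weight d (y : {ffun 'I_d -> bool}) : nat := #|[set i | y i]|.

(* Block permutation with parameters (E, lambda, s).  lambda is given as a
   total function; only its values on Q_s^d matter. *)
Definition blockperm d (E : 'I_d -> nat) (lam : {ffun 'I_d -> bool} -> bool)
  (s : bool) : mat d :=
  [ffun a : cell d =>
     (\big[xorb/false]_(i < d) p_ (E i) (a i) == s) &&
     (xorb (\big[xorb/false]_(i < d) mu_ (E i) (a i))
           (lam [ffun i => p_ (E i) (a i)]) == false)].

Definition subcube d (E : 'I_d -> nat) (y : {ffun 'I_d -> bool}) : {set cell d} :=
  [set a : cell d | [forall i, p_ (E i) (a i) == y i]].

Definition filled d (s : bool) (y : {ffun 'I_d -> bool}) : bool :=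
  odd (weight y) == s.

(* parameters of M_4^d: E = (2,...,2), s = 0 *)
Definition E_M (d : nat) : 'I_d -> nat := fun _ => 2.
Arguments E_M : clear implicits.

(* Main.v *)
Require Import Defs.
From Stdlib Require Import Relation_Operators.
From mathcomp Require Import all_boot all_order.
Set Implicit Arguments. Unset Strict Implicit. Unset Printing Implicit Defensive.

Lemma Tcard (e : nat) (b c : bool) : 1 <= e <= 3 ->
  #|[set x : 'I_4 | (p_ e x == b) && (odd x == c)]| =
   if e == 2 then (if b == c then 2 else 0) else 1.
Proof.
move=> He; rewrite -sum1_card big_mkcond /= !big_ord_recl big_ord0 /= !inE /=.
case: e He => [|[|[|[|e]]]] //= _; case: b; case: c => //.
Qed.

Definition TT d (E : 'I_d -> nat) (z y : {ffun 'I_d -> bool}) (i : 'I_d) :=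
  [set x : 'I_4 | (p_ (E i) x == z i) && (odd x == y i)].

Lemma capE d (E : 'I_d -> nat) z y :
  subcube E z :&: subcube (E_M d) y = [set a : cell d | [forall i, a i \in TT E z y i]].
Proof.
apply/setP=> a; rewrite !inE; apply/andP/forallP => [[/forallP H1 /forallP H2] i | H].
  by rewrite inE H1; exact: H2.
split; apply/forallP => i; move: (H i); rewrite inE => /andP[] //.
Qed.

Lemma prod_neq0 d (T : 'I_d -> {set 'I_4}) :
  ([set a : cell d | [forall i, a i \in T i]] != set0) = [forall i, T i != set0].
Proof.
apply/set0Pn/forallP => [[a]|H].
  rewrite inE => /forallP Ha i; apply/set0Pn; exists (a i); exact: Ha.
exists [ffun i => odflt ord0 [pick x in T i]]; rewrite inE; apply/forallP => i.
rewrite ffunE; case: pickP => [x -> //|H0].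
by move: (H i) => /set0Pn [x Hx]; rewrite H0 in Hx.
Qed.

Lemma cap_neq0 d (E : 'I_d -> nat) z y (HE : forall i, 1 <= E i <= 3) :
  (subcube E z :&: subcube (E_M d) y != set0) = [forall i, (E i == 2) ==> (z i == y i)].
Proof.
rewrite capE prod_neq0; apply: eq_forallb => i.
rewrite -card_gt0 /TT Tcard //; case: (E i == 2); case: (z i == y i) => //.
Qed.

Definition flip d (j0 : 'I_d) (z : {ffun 'I_d -> bool}) : {ffun 'I_d -> bool} :=
  [ffun i => if i == j0 then ~~ z i else z i].

Lemma flipK d (j0 : 'I_d) : involutive (flip j0).
Proof.
move=> z; apply/ffunP => i; rewrite !ffunE; case: eqP => // _; exact: negbK.
Qed.

Lemma odd_flip d (j0 : 'I_d) z : odd (weight (flip j0 z)) = ~~ odd (weight z).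
Proof.
rewrite /weight (cardsD1 j0 [set i | flip j0 z i]) (cardsD1 j0 [set i | z i]).
have -> : [set i | flip j0 z i] :\ j0 = [set i | z i] :\ j0.
  by apply/setP=> i; rewrite !inE ffunE; case: eqP.
rewrite !inE ffunE eqxx !oddD; case: (z j0) => /=; [rewrite negbK|]; by case: (odd _).
Qed.

Lemma card_S d (P : pred 'I_d) (y : {ffun 'I_d -> bool}) :
  #|[set z : {ffun 'I_d -> bool} | [forall i, P i ==> (z i == y i)]]| =
  2 ^ #|[set i | ~~ P i]|.
Proof.
pose F := fun i : 'I_d => if P i then pred1 (y i) else [pred b : bool | true].
have := card_family F.
rewrite foldrE big_image /= => Hc.
have -> : #|[set z : {ffun 'I_d -> bool} | [forall i, P i ==> (z i == y i)]]| =
   #|(family F : simpl_pred {dffun forall x : 'I_d, bool})|.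
  apply: eq_card => z; rewrite inE; apply/forallP/familyP => H i; move: (H i);
  rewrite /F; case: (P i) => //=.
rewrite Hc -prod_nat_const [RHS]big_mkcond /=.
apply: eq_bigr => i _; rewrite /F inE; case: (P i) => /=.
  by rewrite card1.
by rewrite -(card_bool) ; apply: eq_card.
Qed.

Lemma count_half d (P : pred 'I_d) (y : {ffun 'I_d -> bool}) (j0 : 'I_d) (s : bool) :
  ~~ P j0 ->
  #|[set z : {ffun 'I_d -> bool} | (odd (weight z) == s) && [forall i, P i ==> (z i == y i)]]|
  = 2 ^ (#|[set i | ~~ P i]| - 1).
Proof.
move=> Hj0.
set S := [set z : {ffun 'I_d -> bool} | [forall i, P i ==> (z i == y i)]].
set B := [set z : {ffun 'I_d -> bool} | odd (weight z) == s].
have HS : forall w, [forall i, P i ==> (flip j0 w i == y i)] = [forall i, P i ==> (w i == y i)].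
  move=> w; apply: eq_forallb => i; rewrite /flip ffunE; case: (i =P j0) => // ->.
  by rewrite (negbTE Hj0).
have E1 : [set z : {ffun 'I_d -> bool} | (odd (weight z) == s) && [forall i, P i ==> (z i == y i)]] = S :&: B.
  by apply/setP => z; rewrite !inE andbC.
have E2 : flip j0 @: (S :&: B) = S :\: B.
  apply/setP => z; apply/imsetP/idP => [[w Hw ->]|Hz].
    move: Hw; rewrite /S /B !inE HS odd_flip => /andP[-> H]; rewrite andbT.
    by move/eqP: H => <-; case: (odd _).
  exists (flip j0 z); last by rewrite flipK.
  move: Hz; rewrite /S /B !inE HS odd_flip => /andP[H1 ->].
  by move: H1; case: (odd _) => /= H; rewrite ?negbK in H *.
have Hc := cardsID B S.
rewrite -E2 card_imset in Hc; last exact: (can_inj (flipK j0)).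
rewrite E1; move: Hc; rewrite card_S.
have : 0 < #|[set i | ~~ P i]| by apply/card_gt0P; exists j0; rewrite inE.
set n := #|[set i | ~~ P i]|. clearbody n; case: n => // n _; rewrite subn1 /= expnS addnn -mul2n.
by move/eqP; rewrite eqn_mul2l /= => /eqP.
Qed.

Lemma allE2 d (E : 'I_d -> nat) : #|[set i | E i == 2]| = d -> forall i, E i = 2.
Proof.
move=> Hk i.
have HK : [set i | E i == 2] == setT. rewrite eqEcard subsetT cardsT card_ord. by rewrite /=; apply: eq_leq; symmetry; exact: Hk.
by move: (eqP HK) => /setP /(_ i); rewrite !inE => /eqP.
Qed.

Theorem mainTheorem11 (d : nat) (A : mat d) (E : 'I_d -> nat)
  (lam : {ffun 'I_d -> bool} -> bool) (s : bool) :
  3 <= d ->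
  equivalent (M4 d) A ->
  (forall i, 1 <= E i <= 3) ->
  A = blockperm E lam s ->
  let k := #|[set i | E i == 2]| in
  (k < d ->
     forall y : {ffun 'I_d -> bool}, filled false y ->
       #|[set z : {ffun 'I_d -> bool} | filled s z &&
            (subcube E z :&: subcube (E_M d) y != set0)]| = (2 ^ (d - k - 1))%N
       /\ (forall z : {ffun 'I_d -> bool}, filled s z ->
             subcube E z :&: subcube (E_M d) y != set0 ->
             exists T : 'I_d -> {set 'I_4},
               subcube E z :&: subcube (E_M d) y = [set a : cell d | [forall i, a i \in T i]]
               /\ (forall i, (#|T i| == 1) || (#|T i| == 2))
               /\ #|[set i | #|T i| == 2]| = k))
  /\ (k = d -> s = false ->
        [set subcube E z | z in [set z | filled s z]]
        = [set subcube (E_M d) y | y in [set y | filled false y]])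
  /\ (k = d -> s = true ->
        forall z y : {ffun 'I_d -> bool}, filled s z -> filled false y ->
          subcube E z :&: subcube (E_M d) y = set0).
Proof.
move=> Hd _ HE _ k.
split; [|split].
- move=> Hk y Hy.
  have [j0 Hj0] : exists j0, E j0 != 2.
    case: (pickP [pred i | E i != 2]) => [j0 Hj0|H0]; first by exists j0.
    have HK : [set i | E i == 2] = setT.
      by apply/setP => i; rewrite !inE; move: (H0 i) => /= /negbFE.
    by move: Hk; rewrite /k HK cardsT card_ord ltnn.
  split.
  + have -> : #|[set z : {ffun 'I_d -> bool} | filled s z &&
            (subcube E z :&: subcube (E_M d) y != set0)]| =
       #|[set z : {ffun 'I_d -> bool} | (odd (weight z) == s) &&
            [forall i, (fun i => E i == 2) i ==> (z i == y i)]]|.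
      by apply: eq_card => z; rewrite !inE cap_neq0.
    rewrite (count_half y s (P := fun i => E i == 2) Hj0).
    have Hc := cardsC [set i | E i == 2].
    have HC : ~: [set i | E i == 2] = [set i | ~~ (E i == 2)].
      by apply/setP => i; rewrite !inE.
    rewrite HC card_ord in Hc.
    move: Hc; rewrite /k; move: #|[set i | E i == 2]| #|[set i | E i != 2]| => a b <-; by rewrite addKn.
  + move=> z Hz Hne; exists (TT E z y); split; first exact: capE.
    have Hall : [forall i, (E i == 2) ==> (z i == y i)] by rewrite -cap_neq0.
    split.
    * move=> i; move: (forallP Hall i); rewrite /TT Tcard //.
      by case: (E i == 2) => //= ->.
    * rewrite /k; apply: eq_card => i; rewrite !inE /TT Tcard //.
      by move: (forallP Hall i); case: (E i == 2) => //= ->.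
- move=> Hk ->.
  have HE2 := allE2 Hk.
  apply: eq_imset => z; apply/setP => a; rewrite /subcube !inE.
  by apply: eq_forallb => i; rewrite HE2.
- move=> Hk -> z y Hz Hy.
  have HE2 := allE2 Hk.
  apply/setP => a; rewrite inE in_set0; apply/negbTE/andP => [[H1 H2]].
  rewrite /subcube !inE in H1 H2.
  have Hzy : z = y.
    apply/ffunP => i; move/forallP: H1 => /(_ i); rewrite HE2 => /eqP <-.
    by move/forallP: H2 => /(_ i) /eqP <-.
  subst z; move: Hz Hy; rewrite /filled => /eqP ->; done.
Qed.
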